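(* Let $E$ be a graph, $(G,\le)$ an ordered group, $w:E^1\to G_+$ a function, and $R$ a commutative ring with identity; give $L_R(E)$ the $G$-grading induced by $w$. Suppose $\pi:L_R(E)\to A$ is a homomorphism of $G$-graded $R$-algebras such that $\pi(rv)\ne0$ for all $v\in E^0$ and all nonzero $r\in R$. Then $\pi$ is injective.
   Context: A directed graph $E=(E^0,E^1,r,s)$ with range and source maps $r,s:E^1\to E^0$; a vertex $v$ is regular if $0<|s^{-1}(v)|<\infty$. The Leavitt path algebra $L_R(E)$ is the $R$-algebra generated by $\{v:v\in E^0\}\cup\{e,e^*:e\in E^1\}$ subject to: the vertices are pairwise orthogonal idempotents; $s(e)e=e=er(e)$ and $r(e)e^*=e^*=e^*s(e)$; $e^*f=\delta_{e,f}r(e)$ for $e,f\in E^1$; $v=\sum_{e\in s^{-1}(v)}ee^*$ for every regular vertex $v$. An ordered group is a group with a total order $\le$ such that $g\le h$ implies $fg\le fh$ and $gf\le hf$; $G_+=\{c: \varepsilon\le c,\ c\ne\varepsilon\}$. A map $w:E^1\to G$ induces a $G$-grading on $L_R(E)$ by $\deg v=\varepsilon$, $\deg e=w(e)$, $\deg e^*=w(e)^{-1}$. *)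

(* Defs.v *)
From HB Require Import structures.
From mathcomp Require Import all_boot all_order all_algebra.
From Stdlib Require List.
Set Implicit Arguments. Unset Strict Implicit. Unset Printing Implicit Defensive.
Import GRing.Theory.
Local Open Scope ring_scope.

Record ordered_group (G : Type) (op : G -> G -> G) (e : G) (inv : G -> G)
    (le : G -> G -> Prop) : Prop := {
  og_assoc : forall a b c, op a (op b c) = op (op a b) c;
  og_id_l : forall a, op e a = a;
  og_id_r : forall a, op a e = a;
  og_inv_l : forall a, op (inv a) a = e;
  og_inv_r : forall a, op a (inv a) = e;
  og_refl : forall a, le a a;
  og_antisym : forall a b, le a b -> le b a -> a = b;
  og_trans : forall a b c, le a b -> le b c -> le a c;
  og_total : forall a b, le a b \/ le b a;
  og_compat_l : forall f g h, le g h -> le (op f g) (op f h);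
  og_compat_r : forall f g h, le g h -> le (op g f) (op h f) }.

Definition positive_elt (G : Type) (e : G) (le : G -> G -> Prop) (c : G) : Prop :=
  le e c /\ c <> e.

(* Graph E = (V, Ed, rng, src); generators v, e, e^*. *)
Inductive lpa_gen (V Ed : Type) : Type :=
  | GV of V
  | GE of Ed
  | GS of Ed.

Inductive lpa_term (R V Ed : Type) : Type :=
  | TGen of lpa_gen V Ed
  | TZero
  | TAdd of lpa_term R V Ed & lpa_term R V Ed
  | TMul of lpa_term R V Ed & lpa_term R V Ed
  | TScale of R & lpa_term R V Ed.

Arguments TZero {R V Ed}.

Definition tV {R V Ed : Type} (v : V) : lpa_term R V Ed := @TGen R V Ed (@GV V Ed v).
Definition tE {R V Ed : Type} (e : Ed) : lpa_term R V Ed := @TGen R V Ed (@GE V Ed e).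
Definition tS {R V Ed : Type} (e : Ed) : lpa_term R V Ed := @TGen R V Ed (@GS V Ed e).

Definition sum_eestar {R V Ed : Type} (l : seq Ed) : lpa_term R V Ed :=
  foldr (fun e acc => TAdd (TMul (tE e) (tS e)) acc) TZero l.

(* The congruence on terms whose quotient is L_R(E): the smallest congruence
   containing the axioms of an (associative, not necessarily unital) R-algebra
   and the Leavitt path algebra relations. *)
Inductive lpa_eq (R : comPzRingType) (V Ed : Type) (rng src : Ed -> V) :
    lpa_term R V Ed -> lpa_term R V Ed -> Prop :=
  | eq_refl t : lpa_eq rng src t t
  | eq_sym t u : lpa_eq rng src t u -> lpa_eq rng src u t
  | eq_trans t u w : lpa_eq rng src t u -> lpa_eq rng src u w -> lpa_eq rng src t w
  | eq_add t t' u u' : lpa_eq rng src t t' -> lpa_eq rng src u u' ->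
      lpa_eq rng src (TAdd t u) (TAdd t' u')
  | eq_mul t t' u u' : lpa_eq rng src t t' -> lpa_eq rng src u u' ->
      lpa_eq rng src (TMul t u) (TMul t' u')
  | eq_scale (a : R) t t' : lpa_eq rng src t t' ->
      lpa_eq rng src (TScale a t) (TScale a t')
  | eq_addA t u w : lpa_eq rng src (TAdd t (TAdd u w)) (TAdd (TAdd t u) w)
  | eq_addC t u : lpa_eq rng src (TAdd t u) (TAdd u t)
  | eq_add0 t : lpa_eq rng src (TAdd TZero t) t
  | eq_addN t : lpa_eq rng src (TAdd t (TScale (-1) t)) TZero
  | eq_scale1 t : lpa_eq rng src (TScale 1 t) t
  | eq_scaleA (a b : R) t : lpa_eq rng src (TScale a (TScale b t)) (TScale (a * b) t)
  | eq_scaleDl (a b : R) t :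
      lpa_eq rng src (TScale (a + b) t) (TAdd (TScale a t) (TScale b t))
  | eq_scaleDr (a : R) t u :
      lpa_eq rng src (TScale a (TAdd t u)) (TAdd (TScale a t) (TScale a u))
  | eq_mulA t u w : lpa_eq rng src (TMul t (TMul u w)) (TMul (TMul t u) w)
  | eq_mulDl t u w : lpa_eq rng src (TMul (TAdd t u) w) (TAdd (TMul t w) (TMul u w))
  | eq_mulDr t u w : lpa_eq rng src (TMul t (TAdd u w)) (TAdd (TMul t u) (TMul t w))
  | eq_scale_mull (a : R) t u :
      lpa_eq rng src (TMul (TScale a t) u) (TScale a (TMul t u))
  | eq_scale_mulr (a : R) t u :
      lpa_eq rng src (TMul t (TScale a u)) (TScale a (TMul t u))
  | eq_vv v : lpa_eq rng src (TMul (tV v) (tV v)) (tV v)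
  | eq_vw v w : v <> w -> lpa_eq rng src (TMul (tV v) (tV w)) TZero
  | eq_se e : lpa_eq rng src (TMul (tV (src e)) (tE e)) (tE e)
  | eq_er e : lpa_eq rng src (TMul (tE e) (tV (rng e))) (tE e)
  | eq_rs e : lpa_eq rng src (TMul (tV (rng e)) (tS e)) (tS e)
  | eq_ss e : lpa_eq rng src (TMul (tS e) (tV (src e))) (tS e)
  | eq_CK1 e : lpa_eq rng src (TMul (tS e) (tE e)) (tV (rng e))
  | eq_CK1' e f : e <> f -> lpa_eq rng src (TMul (tS e) (tE f)) TZero
  (* CK2: for a regular vertex v, with l an enumeration (without repetition)
     of the finite nonempty set s^{-1}(v) *)
  | eq_CK2 v (l : seq Ed) :
      (forall e, src e = v <-> List.In e l) -> List.NoDup l -> l <> [::] ->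
      lpa_eq rng src (tV v) (sum_eestar l).

(* The component L_g is the set
   of classes of terms t with lpa_homog g t (the span of monomials of degree g). *)
Inductive lpa_homog (R : Type) (V Ed G : Type) (op : G -> G -> G) (eps : G)
    (inv : G -> G) (w : Ed -> G) : G -> lpa_term R V Ed -> Prop :=
  | hom_v v : lpa_homog op eps inv w eps (tV v)
  | hom_e e : lpa_homog op eps inv w (w e) (tE e)
  | hom_s e : lpa_homog op eps inv w (inv (w e)) (tS e)
  | hom_zero g : lpa_homog op eps inv w g TZero
  | hom_add g t u : lpa_homog op eps inv w g t -> lpa_homog op eps inv w g u ->
      lpa_homog op eps inv w g (TAdd t u)
  | hom_scale g (a : R) t : lpa_homog op eps inv w g t ->
      lpa_homog op eps inv w g (TScale a t)
  | hom_mul g h t u : lpa_homog op eps inv w g t -> lpa_homog op eps inv w h u ->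
      lpa_homog op eps inv w (op g h) (TMul t u).

Record nu_algebra (R : comPzRingType) (A : lmodType R) (mul : A -> A -> A) : Prop := {
  alg_mulA : forall x y z, mul x (mul y z) = mul (mul x y) z;
  alg_mulDl : forall x y z, mul (x + y) z = mul x z + mul y z;
  alg_mulDr : forall x y z, mul x (y + z) = mul x y + mul x z;
  alg_scale_mull : forall (a : R) x y, mul (a *: x) y = a *: mul x y;
  alg_scale_mulr : forall (a : R) x y, mul x (a *: y) = a *: mul x y }.

Record graded_algebra (R : comPzRingType) (A : lmodType R) (mul : A -> A -> A)
    (G : Type) (op : G -> G -> G) (Acomp : G -> A -> Prop) : Prop := {
  gr_zero : forall g, Acomp g 0;
  gr_add : forall g x y, Acomp g x -> Acomp g y -> Acomp g (x + y);
  gr_scale : forall g (a : R) x, Acomp g x -> Acomp g (a *: x);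
  gr_mul : forall g h x y, Acomp g x -> Acomp h y -> Acomp (op g h) (mul x y);
  gr_span : forall x : A, exists l : seq (G * A),
      (forall p, List.In p l -> Acomp p.1 p.2) /\ x = \sum_(p <- l) p.2;
  gr_indep : forall l : seq (G * A),
      List.NoDup (map fst l) -> (forall p, List.In p l -> Acomp p.1 p.2) ->
      \sum_(p <- l) p.2 = 0 -> forall p, List.In p l -> p.2 = 0 }.

Record lpa_hom (R : comPzRingType) (V Ed : Type) (rng src : Ed -> V)
    (A : lmodType R) (mul : A -> A -> A) (pi : lpa_term R V Ed -> A) : Prop := {
  hom_wd : forall t u, lpa_eq rng src t u -> pi t = pi u;
  hom_addP : forall t u, pi (TAdd t u) = pi t + pi u;
  hom_mulP : forall t u, pi (TMul t u) = mul (pi t) (pi u);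
  hom_scaleP : forall (a : R) t, pi (TScale a t) = a *: pi t }.

(* Main.v *)
Require Import Defs.
From HB Require Import structures.
From mathcomp Require Import all_boot all_order all_algebra.
From Stdlib Require Import Setoid Morphisms Classical ClassicalEpsilon.
Import Defs.
Set Implicit Arguments. Unset Strict Implicit. Unset Printing Implicit Defensive.
Local Open Scope ring_scope.
Import GRing.Theory.

Definition dec (P : Prop) : bool := if excluded_middle_informative P then true else false.
Lemma decP (P : Prop) : reflect P (dec P).
Proof. rewrite /dec; case: excluded_middle_informative => h; by constructor. Qed.
Lemma decT (P : Prop) : P -> dec P = true.
Proof. by move=> h; apply/decP. Qed.
Lemma decF (P : Prop) : ~ P -> dec P = false.
Proof. by move=> h; apply/decP. Qed.

Lemma In_filter (T : Type) (p : pred T) (l : seq T) x :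
  List.In x (filter p l) <-> List.In x l /\ p x.
Proof.
elim: l => [|y l IH] /=; first by split=> // [[]].
case py: (p y) => /=; rewrite IH; intuition (subst; auto; try congruence).
Qed.

Lemma In_cat (T : Type) (l1 l2 : seq T) x :
  List.In x (l1 ++ l2) <-> List.In x l1 \/ List.In x l2.
Proof.
elim: l1 => [|y l IH] /=; first by split; [right|case].
rewrite IH; tauto.
Qed.

Lemma dedup_ex (T : Type) (l : seq T) (P : T -> Prop) :
  exists U, List.NoDup U /\ forall e, List.In e U <-> List.In e l /\ P e.
Proof.
elim: l => [|x l [U [HU HUe]]].
  by exists [::]; split; [constructor|move=> e /=; tauto].
case: (classic (P x /\ ~ List.In x U)) => [[Px nx]|h].
  exists (x :: U); split; first by constructor.
  move=> e /=; rewrite HUe; split; first by case=> [<-|]; tauto.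
  by case=> [[<-|] ?]; tauto.
exists U; split=> // e; rewrite HUe /=; split; first tauto.
case=> [[<-|] Pe]; last tauto.
case: (classic (List.In x U)) => [|ne]; first by rewrite HUe; tauto.
by exfalso; apply: h.
Qed.

Section Terms.
Variables (V Ed : Type) (rng src : Ed -> V) (R : comPzRingType).
Notation term := (lpa_term R V Ed).
Notation eqv := (@lpa_eq R V Ed rng src).
Local Notation "x === y" := (eqv x y) (at level 70).

Instance eqv_equiv : Equivalence eqv.
Proof. split; [exact: eq_refl | exact: eq_sym | exact: eq_trans]. Qed.
Instance tadd_m : Proper (eqv ==> eqv ==> eqv) (@TAdd R V Ed).
Proof. move=> ? ? h ? ? h'; exact: eq_add. Qed.
Instance tmul_m : Proper (eqv ==> eqv ==> eqv) (@TMul R V Ed).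
Proof. move=> ? ? h ? ? h'; exact: eq_mul. Qed.
Instance tscale_m a : Proper (eqv ==> eqv) (@TScale R V Ed a).
Proof. move=> ? ? h; exact: eq_scale. Qed.

Implicit Types t : term.
#[local] Hint Resolve Defs.eq_refl : core.

Lemma tAddC t u : TAdd t u === TAdd u t. Proof. exact: eq_addC. Qed.
Lemma tAddA t u z : TAdd t (TAdd u z) === TAdd (TAdd t u) z. Proof. exact: eq_addA. Qed.
Lemma tAdd0 t : TAdd TZero t === t. Proof. exact: eq_add0. Qed.
Lemma tAddr0 t : TAdd t TZero === t. Proof. by rewrite tAddC tAdd0. Qed.
Lemma tAddN t : TAdd t (TScale (-1) t) === TZero. Proof. exact: eq_addN. Qed.
Lemma tNAdd t : TAdd (TScale (-1) t) t === TZero. Proof. by rewrite tAddC tAddN. Qed.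
Lemma tMulA t u z : TMul t (TMul u z) === TMul (TMul t u) z. Proof. exact: eq_mulA. Qed.

Lemma cancel_double x : x === TAdd x x -> x === TZero.
Proof.
move=> h.
transitivity (TAdd x (TAdd x (TScale (-1) x))); first by rewrite tAddN tAddr0.
by rewrite tAddA -h tAddN.
Qed.

Lemma mul0l t : TMul TZero t === TZero.
Proof.
apply: cancel_double.
by rewrite -eq_mulDl tAdd0.
Qed.
Lemma mul0r t : TMul t TZero === TZero.
Proof. apply: cancel_double. by rewrite -eq_mulDr tAdd0. Qed.
Lemma scale0r a : TScale a (@TZero R V Ed) === TZero.
Proof. apply: cancel_double. by rewrite -eq_scaleDr tAdd0. Qed.
Lemma scale0l t : TScale 0 t === TZero.
Proof. apply: cancel_double. by rewrite -eq_scaleDl GRing.addr0. Qed.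
Lemma scale1 t : TScale 1 t === t. Proof. exact: eq_scale1. Qed.

Lemma zero_eqv t : t === TZero -> forall u, u === TAdd u t.
Proof. by move=> h u; rewrite h tAddr0. Qed.

Lemma eqv_of_diff t u : TAdd t (TScale (-1) u) === TZero -> t === u.
Proof.
move=> h.
transitivity (TAdd (TAdd t (TScale (-1) u)) u); last by rewrite h tAdd0.
by rewrite -tAddA tNAdd tAddr0.
Qed.


Definition sumT (X : Type) (l : seq X) (f : X -> term) : term :=
  foldr (fun i acc => TAdd (f i) acc) TZero l.
Arguments sumT {X} l f.

Lemma sumT_eq (X : Type) (l : seq X) f g :
  (forall x, List.In x l -> f x === g x) -> sumT l f === sumT l g.
Proof.
elim: l => [|x l IH] h //=.
rewrite (h x); last by left.
by rewrite IH // => y hy; apply: h; right.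
Qed.

Lemma sumT_zero (X : Type) (l : seq X) f :
  (forall x, List.In x l -> f x === TZero) -> sumT l f === TZero.
Proof.
move=> h; rewrite (sumT_eq h); elim: l {h} => //= x l ->; exact: tAdd0.
Qed.

Lemma sumT_cat (X : Type) (l1 l2 : seq X) f :
  sumT (l1 ++ l2) f === TAdd (sumT l1 f) (sumT l2 f).
Proof.
elim: l1 => [|x l IH] /=; first by rewrite tAdd0.
by rewrite IH tAddA.
Qed.

Lemma add4 a b c d : TAdd (TAdd a b) (TAdd c d) === TAdd (TAdd a c) (TAdd b d).
Proof.
rewrite -!tAddA; apply: eq_add => //.
by rewrite !tAddA (tAddC b c).
Qed.

Lemma sumT_add (X : Type) (l : seq X) f g :
  sumT l (fun x => TAdd (f x) (g x)) === TAdd (sumT l f) (sumT l g).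
Proof.
elim: l => [|x l IH] /=; first by rewrite tAdd0.
by rewrite IH add4.
Qed.

Lemma sumT_filter (X : Type) (p : pred X) (l : seq X) f :
  sumT l f === TAdd (sumT (filter p l) f) (sumT (filter (predC p) l) f).
Proof.
elim: l => [|x l IH] /=; first by rewrite tAdd0.
case: (p x) => /=; rewrite IH; first by rewrite tAddA.
by rewrite !tAddA (tAddC (f x)).
Qed.

Lemma sumT_mull (X : Type) (l : seq X) f t :
  TMul (sumT l f) t === sumT l (fun x => TMul (f x) t).
Proof.
elim: l => [|x l IH] /=; first exact: mul0l.
by rewrite eq_mulDl IH.
Qed.

Lemma sumT_mulr (X : Type) (l : seq X) f t :
  TMul t (sumT l f) === sumT l (fun x => TMul t (f x)).
Proof.
elim: l => [|x l IH] /=; first exact: mul0r.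
by rewrite eq_mulDr IH.
Qed.

Lemma sumT_scale (X : Type) (l : seq X) f a :
  TScale a (sumT l f) === sumT l (fun x => TScale a (f x)).
Proof.
elim: l => [|x l IH] /=; first exact: scale0r.
by rewrite eq_scaleDr IH.
Qed.

Lemma sumT_flatten (X Y : Type) (l : seq X) (g : X -> seq Y) f :
  sumT (flatten (map g l)) f === sumT l (fun x => sumT (g x) f).
Proof.
elim: l => [|x l IH] //=.
by rewrite sumT_cat IH.
Qed.

Lemma sumT_single (l : seq Ed) g k :
  List.NoDup l -> List.In k l -> (forall f, List.In f l -> f <> k -> g f === TZero) ->
  sumT l g === g k.
Proof.
elim: l => [|x l IH] //= hnd hk h; inversion hnd; subst.
case: hk => [exk|hk].
  subst x.
  rewrite (sumT_zero (f := g)) ?tAddr0 // => f hf; apply: h; first by right.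
  by move=> e; subst.
rewrite IH //; last by move=> f hf; apply: h; right.
rewrite h ?tAdd0 //; first by left.
by move=> e; subst.
Qed.

Lemma sumT_partition (X K : Type) (l : seq X) (key : X -> K) (U : seq K) f :
  List.NoDup U -> (forall x, List.In x l -> List.In (key x) U) ->
  sumT l f === sumT U (fun k => sumT (filter (fun x => dec (key x = k)) l) f).
Proof.
elim: U l => [|k U IH] l hnd hl /=.
  by case: l hl => [|x l] // /(_ x (or_introl erefl)).
inversion hnd; subst.
rewrite (sumT_filter (fun x => dec (key x = k))); apply: eq_add => //.
rewrite IH //.
  apply: sumT_eq => k' hk'.
  suff -> : filter (fun x => dec (key x = k')) (filter (predC (fun x => dec (key x = k))) l)
     = filter (fun x => dec (key x = k')) l by [].
  rewrite -filter_predI; apply: eq_filter => x /=.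
  case: decP => [ek'|ne] //=.
  case: decP => // ek.
  by exfalso; apply: H1; rewrite -ek ek'.
move=> x /In_filter [hx]; rewrite /= /predC /=; case: decP => //= ne _.
by case: (hl x hx) => // ?; subst.
Qed.


Definition re (a : seq Ed) (u : V) : term := foldr (fun e t => TMul (tE e) t) (tV u) a.
Definition gh (b : seq Ed) (u : V) : term := foldr (fun e t => TMul t (tS e)) (tV u) b.
Arguments re : simpl never.
Arguments gh : simpl never.
Lemma gh0 u : gh [::] u = tV u. Proof. by []. Qed.
Lemma re0 u : re [::] u = tV u. Proof. by []. Qed.
Lemma ghS e b u : gh (e :: b) u = TMul (gh b u) (tS e). Proof. by []. Qed.
Lemma reS e a u : re (e :: a) u = TMul (tE e) (re a u). Proof. by []. Qed.
Definition psrc (a : seq Ed) (u : V) : V := if a is e :: _ then src e else u.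
Fixpoint pt (a : seq Ed) (u : V) : Prop :=
  if a is e :: a' then rng e = psrc a' u /\ pt a' u else True.

Lemma vre a u : TMul (tV (psrc a u)) (re a u) === re a u.
Proof.
case: a => [|e a] /=; first exact: eq_vv.
by rewrite tMulA eq_se.
Qed.

Lemma ghv b u : TMul (gh b u) (tV (psrc b u)) === gh b u.
Proof.
case: b => [|e b] /=; first exact: eq_vv.
by rewrite -tMulA eq_ss.
Qed.

Lemma rev_ a u : TMul (re a u) (tV u) === re a u.
Proof.
elim: a => [|e a IH] /=; first exact: eq_vv.
by rewrite -tMulA IH.
Qed.

Lemma vgh b u : TMul (tV u) (gh b u) === gh b u.
Proof.
elim: b => [|e b IH] /=; first exact: eq_vv.
by rewrite tMulA IH.
Qed.

Lemma ghre_same a u : pt a u -> TMul (gh a u) (re a u) === tV u.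
Proof.
elim: a => [|e a IH] /=; first by move=> _; exact: eq_vv.
case=> he hp.
rewrite -tMulA (tMulA (tS e)) eq_CK1 he vre; exact: IH.
Qed.

Lemma re_cat a c u u' : psrc c u' = u -> TMul (re a u) (re c u') === re (a ++ c) u'.
Proof.
move=> hc; elim: a => [|e a IH] /=; first by rewrite -hc vre.
by rewrite -tMulA IH.
Qed.

Lemma gh_cat b d u u' : psrc b u = u' -> TMul (gh b u) (gh d u') === gh (d ++ b) u.
Proof.
move=> hb; elim: d => [|e d IH] /=; first by rewrite -hb ghv.
by rewrite tMulA IH.
Qed.

Lemma pt_cat a c u u' : pt a u -> pt c u' -> psrc c u' = u -> pt (a ++ c) u'.
Proof.
move=> ha hc hs; elim: a ha => [|e a IH] //= [he ha]; split; last exact: IH.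
by case: a he {IH ha} => [|f a] //= ->; rewrite -hs.
Qed.


Lemma In_flatten (X Y : Type) (g : X -> seq Y) (l : seq X) y :
  List.In y (flatten (map g l)) -> exists x, List.In x l /\ List.In y (g x).
Proof.
elim: l => [|x l IH] //= /In_cat [h|/IH [x' [h1 h2]]]; first by exists x; auto.
by exists x'; auto.
Qed.

Lemma In_map (X Y : Type) (g : X -> Y) (l : seq X) y :
  List.In y (map g l) -> exists x, List.In x l /\ y = g x.
Proof.
elim: l => [|x l IH] //= [<-|/IH [x' [h1 h2]]]; first by exists x; auto.
by exists x'; auto.
Qed.

Lemma sumT_map (X Y : Type) (g : X -> Y) (l : seq X) f :
  sumT (map g l) f = sumT l (fun x => f (g x)).
Proof. by elim: l => //= x l ->. Qed.

Record mon := Mon { mc : R; mu : V; ma : seq Ed; mb : seq Ed }.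
Definition mterm (m : mon) : term :=
  TScale (mc m) (TMul (re (ma m) (mu m)) (gh (mb m) (mu m))).
Definition mvalid (m : mon) : Prop := pt (ma m) (mu m) /\ pt (mb m) (mu m).
Definition nf (x : seq mon) : term := sumT x mterm.
Definition allv (x : seq mon) : Prop := forall m, List.In m x -> mvalid m.

Lemma nf1 m : nf [:: m] === mterm m.
Proof. exact: tAddr0. Qed.

Fixpoint mm (r : R) (u : V) (a b : seq Ed) (u' : V) (c d : seq Ed) : seq mon :=
  match b with
  | [::] => match c with
            | [::] => if dec (u = u') then [:: Mon r u a d] else [::]
            | c1 :: _ => if dec (u = src c1) then [:: Mon r u' (a ++ c) d] else [::]
            end
  | b1 :: b' => match c with
            | [::] => if dec (src b1 = u') then [:: Mon r u a (d ++ b)] else [::]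
            | c1 :: c' => if dec (b1 = c1) then mm r u a b' u' c' d else [::]
            end
  end.

Lemma mm_spec r u a b u' c d : pt b u -> pt c u' ->
  TScale r (TMul (TMul (re a u) (TMul (gh b u) (re c u'))) (gh d u'))
  === nf (mm r u a b u' c d).
Proof.
elim: b c => [|b1 b IH] [|c1 c] hb hc; rewrite [mm _ _ _ _ _ _ _]/=.
- case: decP => [<-|ne]; rewrite ?nf1 /mterm /=.
    by rewrite eq_vv rev_.
  by rewrite eq_vw // mul0r mul0l scale0r.
- case: decP => [hu|ne]; rewrite ?nf1 /mterm /=.
    have e1 : psrc (c1 :: c) u' = u by rewrite hu.
    rewrite gh0 -{2}e1 vre re_cat //.
  rewrite gh0 -(vre (c1 :: c) u') (tMulA (tV u)) eq_vw // mul0l mul0r mul0l scale0r //.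
- case: decP => [hu|ne]; rewrite ?nf1 /mterm /=.
    have e1 : psrc (b1 :: b) u = u' by [].
    rewrite re0 -{1}e1 ghv -tMulA gh_cat //.
  rewrite re0 -(ghv (b1 :: b) u) -(tMulA (gh (b1 :: b) u)) eq_vw // mul0r mul0r mul0l scale0r //.
- case: decP => [hbc|ne]; last first.
    have -> : gh (b1 :: b) u = TMul (gh b u) (tS b1) by [].
    have -> : re (c1 :: c) u' = TMul (tE c1) (re c u') by [].
    rewrite -(tMulA (gh b u)) (tMulA (tS b1)) eq_CK1' // mul0l mul0r mul0r mul0l scale0r //.
  subst c1.
  have -> : gh (b1 :: b) u = TMul (gh b u) (tS b1) by [].
  have -> : re (b1 :: c) u' = TMul (tE b1) (re c u') by [].
  case: hb => _ hb; case: hc => hc1 hc.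
  rewrite -(tMulA (gh b u)) (tMulA (tS b1)) eq_CK1 hc1 vre; exact: IH.
Qed.

Lemma mm_valid r u a b u' c d : pt a u -> pt b u -> pt c u' -> pt d u' ->
  allv (mm r u a b u' c d).
Proof.
move=> ha; elim: b c => [|b1 b IH] [|c1 c] hb hc hd; rewrite [mm _ _ _ _ _ _ _]/=.
- case: decP => [hu|ne] m //= [<-|] //; rewrite /mvalid /=; split=> //; by rewrite hu.
- case: decP => [hu|ne] m //= [<-|] //; rewrite /mvalid /=; split=> //.
  by apply: (pt_cat ha hc); rewrite hu.
- case: decP => [hu|ne] m //= [<-|] //; rewrite /mvalid /=; split=> //.
  exact: (pt_cat hd hb).
- case: decP => [hbc|ne] m //; subst c1.
  by apply: IH; [case: hb|case: hc|].
Qed.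

Definition mulmon (m1 m2 : mon) : seq mon :=
  mm (mc m1 * mc m2) (mu m1) (ma m1) (mb m1) (mu m2) (ma m2) (mb m2).

Lemma mulmon_spec m1 m2 : mvalid m1 -> mvalid m2 ->
  TMul (mterm m1) (mterm m2) === nf (mulmon m1 m2).
Proof.
move: m1 m2 => [r u a b] [s u2 c d] [ha hb] [hc hd].
rewrite /mulmon /mterm /= -mm_spec //.
rewrite eq_scale_mull eq_scale_mulr eq_scaleA.
apply: eq_scale.
by rewrite -!tMulA (tMulA (gh b u)).
Qed.

Definition prodl (x y : seq mon) : seq mon :=
  flatten (map (fun m1 => flatten (map (fun m2 => mulmon m1 m2) y)) x).

Lemma nf_mul x y : allv x -> allv y -> TMul (nf x) (nf y) === nf (prodl x y).
Proof.
move=> hx hy; rewrite /nf /prodl sumT_flatten sumT_mull.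
apply: sumT_eq => m1 h1; rewrite sumT_flatten sumT_mulr.
by apply: sumT_eq => m2 h2; apply: mulmon_spec; [apply: hx|apply: hy].
Qed.

Lemma prodl_valid x y : allv x -> allv y -> allv (prodl x y).
Proof.
move=> hx hy m hm0; rewrite /prodl in hm0.
case: (In_flatten hm0) => m1 [h1 hm1]; case: (In_flatten hm1) => m2 [h2 hm].
case: (hx _ h1) => ha hb; case: (hy _ h2) => hc hd.
exact: (mm_valid ha hb hc hd hm).
Qed.

Definition scl (r : R) (x : seq mon) : seq mon :=
  map (fun m => Mon (r * mc m) (mu m) (ma m) (mb m)) x.

Lemma nf_scl r x : TScale r (nf x) === nf (scl r x).
Proof.
rewrite /nf /scl sumT_map sumT_scale; apply: sumT_eq => m _.
exact: eq_scaleA.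
Qed.

Lemma scl_valid r x : allv x -> allv (scl r x).
Proof. move=> hx m hm; rewrite /scl in hm; case: (In_map hm) => m' [h ->]; exact: (hx m' h). Qed.

Lemma normal_form t : exists x, allv x /\ t === nf x.
Proof.
elim: t => [[v|e|e]| |t [x [hx ex]] u [y [hy ey]]|t [x [hx ex]] u [y [hy ey]]|r t [x [hx ex]]].
- exists [:: Mon 1 v [::] [::]]; split; first by move=> m [<-|].
  by rewrite nf1 /mterm /= scale1 eq_vv.
- exists [:: Mon 1 (rng e) [:: e] [::]]; split; first by move=> m [<-|] //.
  by rewrite nf1 /mterm /= scale1 -tMulA eq_vv eq_er.
- exists [:: Mon 1 (rng e) [::] [:: e]]; split; first by move=> m [<-|] //.
  by rewrite nf1 /mterm /= scale1 tMulA eq_vv eq_rs.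
- by exists [::].
- exists (x ++ y); split; first by move=> m /In_cat [/hx|/hy].
  by rewrite /nf sumT_cat ex ey.
- exists (prodl x y); split; first exact: prodl_valid.
  by rewrite ex ey nf_mul.
- exists (scl r x); split; first exact: scl_valid.
  by rewrite ex nf_scl.
Qed.


Variables (G : Type) (op : G -> G -> G) (eps : G) (inv : G -> G) (le : G -> G -> Prop).
Hypothesis HG : ordered_group op eps inv le.
Variable (w : Ed -> G).
Hypothesis Hw : forall e, positive_elt eps le (w e).

Definition wp (a : seq Ed) : G := foldr (fun e g => op (w e) g) eps a.
Definition gd (b : seq Ed) : G := foldr (fun e g => op g (inv (w e))) eps b.
Definition mdeg (m : mon) : G := op (wp (ma m)) (gd (mb m)).

Lemma wp_ge a : le eps (wp a).
Proof.
elim: a => [|e a IH] /=; first exact: (og_refl HG).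
apply: (og_trans HG (proj1 (Hw e))).
rewrite -{1}(og_id_r HG (w e)); exact: (og_compat_l HG).
Qed.

Lemma wp_ne e a : op (w e) (wp a) <> eps.
Proof.
move=> h; apply: (proj2 (Hw e)).
apply: (og_antisym HG); last exact: (proj1 (Hw e)).
rewrite -h -{1}(og_id_r HG (w e)); apply: (og_compat_l HG); exact: wp_ge.
Qed.

Lemma op_cancel_l x a b : op x a = op x b -> a = b.
Proof.
move=> h; rewrite -(og_id_l HG a) -(og_id_l HG b) -(og_inv_l HG x).
by rewrite -!(og_assoc HG) h.
Qed.

Lemma wp_rcons a e : wp (a ++ [:: e]) = op (wp a) (w e).
Proof.
elim: a => [|f a IH] /=; first by rewrite (og_id_r HG) (og_id_l HG).
by rewrite IH (og_assoc HG).
Qed.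

Lemma ghre_diff a c u : pt a u -> pt c u -> wp a = wp c -> a <> c ->
  TMul (gh a u) (re c u) === TZero.
Proof.
elim: a c => [|e a IH] [|f c] //= ha hc hw hne.
- by exfalso; apply: (@wp_ne f c); rewrite -hw.
- by exfalso; apply: (@wp_ne e a); rewrite hw.
rewrite ghS reS -(tMulA (gh a u)) (tMulA (tS e)).
case: (classic (e = f)) => [ef|ne]; last by rewrite eq_CK1' // mul0l mul0r.
subst f; rewrite eq_CK1 (proj1 hc) vre; apply: IH.
- exact: (proj2 ha).
- exact: (proj2 hc).
- exact: (op_cancel_l hw).
- by move=> ac; apply: hne; rewrite ac.
Qed.

Notation homog := (@lpa_homog R V Ed G op eps inv w).

Lemma re_homog a u : homog (wp a) (re a u).
Proof. elim: a => [|e a IH]; first exact: hom_v. rewrite reS /=; apply: hom_mul IH; exact: hom_e. Qed.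

Lemma gh_homog b u : homog (gd b) (gh b u).
Proof. elim: b => [|e b IH]; first exact: hom_v. rewrite ghS /=; apply: hom_mul IH _; exact: hom_s. Qed.

Lemma nf_homog x g : (forall m, List.In m x -> mdeg m = g) -> homog g (nf x).
Proof.
elim: x => [|m x IH] h; first exact: hom_zero.
apply: hom_add; last by apply: IH => m' hm'; apply: h; right.
rewrite -(h m); last by left.
apply: hom_scale; apply: hom_mul; [exact: re_homog | exact: gh_homog].
Qed.


Variables (A : lmodType R) (mul : A -> A -> A).
Hypothesis HA : nu_algebra mul.
Variable (Acomp : G -> A -> Prop).
Hypothesis HAgr : graded_algebra mul op Acomp.
Variable (pi : term -> A).
Hypothesis Hpi : lpa_hom rng src mul pi.
Hypothesis Hpigr : forall g t, homog g t -> Acomp g (pi t).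
Hypothesis Hnz : forall v (a : R), a != 0 -> pi (TScale a (tV v)) <> 0.

Lemma pi_eqv t t' : t === t' -> pi t = pi t'.
Proof. exact: (hom_wd Hpi). Qed.

Lemma pi0 : pi TZero = 0.
Proof.
apply: (addrI (pi TZero)); rewrite addr0 -(hom_addP Hpi).
by apply: pi_eqv; apply: tAdd0.
Qed.

Lemma mul0x (y : A) : mul 0 y = 0.
Proof. by apply: (addrI (mul 0 y)); rewrite -(alg_mulDl HA) !addr0. Qed.
Lemma mulx0 (y : A) : mul y 0 = 0.
Proof. by apply: (addrI (mul y 0)); rewrite -(alg_mulDr HA) !addr0. Qed.

Lemma pi_mull0 t t' : pi t = 0 -> pi (TMul t t') = 0.
Proof. by move=> h; rewrite (hom_mulP Hpi) h mul0x. Qed.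
Lemma pi_mulr0 t t' : pi t' = 0 -> pi (TMul t t') = 0.
Proof. by move=> h; rewrite (hom_mulP Hpi) h mulx0. Qed.

Lemma pi_sumT (X : Type) (l : seq X) f : pi (sumT l f) = \sum_(i <- l) pi (f i).
Proof.
elim: l => [|x l IH] /=; first by rewrite big_nil pi0.
by rewrite big_cons (hom_addP Hpi) IH.
Qed.

Definition rpprop (v : V) (g : G) (m : mon) : Prop :=
  mvalid m /\ mb m = [::] /\ mu m = v /\ wp (ma m) = g.

Lemma grp_nf (y : seq mon) a1 v :
  (forall m, List.In m y -> ma m = a1 /\ mb m = [::] /\ mu m = v) ->
  nf y === TScale (\sum_(m <- y) mc m) (TMul (re a1 v) (gh [::] v)).
Proof.
elim: y => [|m y IH] h /=; first by rewrite big_nil scale0l.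
rewrite big_cons /nf /= -/(nf y) IH; last by move=> m' hm'; apply: h; right.
rewrite /mterm; case: (h m (or_introl erefl)) => [-> [-> ->]].
by rewrite -eq_scaleDl.
Qed.

Lemma RP (n : nat) : forall (x : seq mon) (v : V) (g : G) (q q' : term) (z : V), (size x <= n)%N ->
  (forall m, List.In m x -> rpprop v g m) ->
  TMul (tV v) q === q -> TMul q' q === tV z ->
  pi (TMul (nf x) q) = 0 -> nf x === TZero.
Proof.
elim: n => [|n IHn] [|m1 x] v g q q' z //= hs hx hq hq' hpi.
set X := m1 :: x.
change (nf X === TZero); change (pi (TMul (nf X) q) = 0) in hpi.
set a1 := ma m1.
pose P := fun m : mon => dec (ma m = a1).
have hX : forall m, List.In m X -> rpprop v g m by [].
case: (hx m1 (or_introl erefl)) => [[ha1 _] [_ [hv1 hw1]]].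
rewrite hv1 in ha1.
have key : forall y, (forall m, List.In m y -> rpprop v g m) ->
    TMul (gh a1 v) (nf y) === TScale (\sum_(m <- y | P m) mc m) (tV v).
  elim=> [|m y IH] hy /=; first by rewrite big_nil scale0l mul0r.
  rewrite big_cons /nf /= -/(nf y) eq_mulDr IH; last by move=> m' hm'; apply: hy; right.
  case: (hy m (or_introl erefl)) => [[ham _] [hbm [hvm hwm]]].
  rewrite /mterm hbm hvm gh0 rev_ eq_scale_mulr.
  rewrite hvm in ham.
  rewrite /P; case: decP => [ea|ne].
    by rewrite ea ghre_same // -eq_scaleDl.
  rewrite ghre_diff //; first by rewrite scale0r tAdd0.
  - by rewrite /a1 hw1 hwm.
  - by move=> e; apply: ne; rewrite e.
set c := \sum_(m <- X | P m) mc m.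
have c0 : c = 0.
  case: (eqVneq c 0) => // hc; exfalso; apply: (Hnz (v := z) hc).
  have -> : pi (TScale c (tV z)) = pi (TMul q' (TMul (gh a1 v) (TMul (nf X) q))).
    apply: pi_eqv.
    rewrite (tMulA (gh a1 v)) key // eq_scale_mull hq eq_scale_mulr hq'.
    by [].
  by apply: pi_mulr0; apply: pi_mulr0.
have hP : nf (filter P X) === TZero.
  rewrite (grp_nf (a1 := a1) (v := v)).
    by rewrite big_filter -/c c0 scale0l.
  move=> m /In_filter [hm]; rewrite /P; case: decP => // ea _.
  by case: (hx m hm) => [_ [hb [hv _]]].
have split : nf X === nf (filter (predC P) X).
  by rewrite {1}/nf (sumT_filter P) -/(nf (filter P X)) hP tAdd0.
rewrite split.
apply: (IHn _ v g q q' z).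
- rewrite /X /= /P /predC /=.
  rewrite decT //= size_filter (leq_trans (count_size _ _)) //.
- by move=> m /In_filter [hm _]; apply: hx.
- exact: hq.
- exact: hq'.
- by rewrite -hpi; apply: pi_eqv; rewrite split.
Qed.


Definition msrc (m : mon) : V := psrc (mb m) (mu m).

Lemma mterm_v m v :
  TMul (mterm m) (tV v) === if dec (msrc m = v) then mterm m else TZero.
Proof.
case: m => r u a b; rewrite /mterm /msrc /=.
rewrite eq_scale_mull -tMulA.
case: decP => [<-|ne]; first by rewrite ghv.
by rewrite -(ghv b u) -(tMulA (gh b u)) eq_vw // !mul0r scale0r.
Qed.

Lemma nf_v x v : TMul (nf x) (tV v) === nf (filter (fun m => dec (msrc m = v)) x).
Proof.
elim: x => [|m x IH] /=; first exact: mul0l.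
rewrite /nf /= -/(nf x) eq_mulDl IH mterm_v.
by case: decP => _ /=; rewrite // tAdd0.
Qed.

Lemma filter_all_In (X : Type) (p : pred X) (l : seq X) :
  (forall x, List.In x l -> p x) -> filter p l = l.
Proof.
elim: l => [|x l IH] //= h; rewrite h; last by left.
by rewrite IH // => y hy; apply: h; right.
Qed.

Definition mulE (m : mon) (e : Ed) : seq mon :=
  match mb m with
  | [::] => if dec (mu m = src e) then [:: Mon (mc m) (rng e) (ma m ++ [:: e]) [::]] else [::]
  | b1 :: b' => if dec (b1 = e) then [:: Mon (mc m) (mu m) (ma m) b'] else [::]
  end.

Lemma mulE_spec m e : mvalid m -> TMul (mterm m) (tE e) === nf (mulE m e).
Proof.
case: m => r u a [|b1 b] [ha hb]; rewrite /mulE /mterm /=.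
  rewrite gh0 eq_scale_mull -tMulA.
  case: decP => [hu|ne].
    rewrite nf1 /mterm /= gh0 rev_ hu eq_se -re_cat //.
    rewrite reS re0 eq_er.
    by [].
  by rewrite -(@eq_se R V Ed rng src e) (tMulA (tV u)) eq_vw // mul0l !mul0r scale0r.
rewrite eq_scale_mull ghS -!tMulA.
case: decP => [hb1|ne].
  rewrite hb1 eq_CK1 nf1 /mterm /=.
  case: hb => hb1' _; rewrite -hb1 hb1' ghv //.
by rewrite eq_CK1' // !mul0r scale0r.
Qed.

Lemma mulE_valid m e : mvalid m -> allv (mulE m e).
Proof.
case: m => r u a [|b1 b] [ha hb]; rewrite /mulE /=.
  case: decP => // hu m' [<-|] //; split=> //=.
  by apply: (pt_cat ha) => //=.
case: decP => // hb1 m' [<-|] //; split=> //=; exact: (proj2 hb).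
Qed.

Lemma mulE_deg m e g : mdeg m = g -> forall m', List.In m' (mulE m e) -> mdeg m' = op g (w e).
Proof.
case: m => r u a [|b1 b]; rewrite /mulE /mdeg /= => <-.
  case: decP => // hu m' [<-|] //=.
  by rewrite wp_rcons !(og_id_r HG).
case: decP => // hb1 m' [<-|] //=; subst b1.
by rewrite -!(og_assoc HG) (og_inv_l HG) (og_id_r HG).
Qed.

Definition mulEl (x : seq mon) (e : Ed) : seq mon := flatten (map (fun m => mulE m e) x).

Lemma nf_mulE x e : allv x -> TMul (nf x) (tE e) === nf (mulEl x e).
Proof.
move=> hx; rewrite /nf /mulEl sumT_flatten sumT_mull.
by apply: sumT_eq => m hm; apply: mulE_spec; apply: hx.
Qed.

Lemma mulEl_valid x e : allv x -> allv (mulEl x e).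
Proof.
move=> hx m hm; rewrite /mulEl in hm; case: (In_flatten hm) => m1 [h1 h2].
exact: (mulE_valid (hx _ h1) h2).
Qed.

Lemma mulEl_deg x e g : (forall m, List.In m x -> mdeg m = g) ->
  forall m, List.In m (mulEl x e) -> mdeg m = op g (w e).
Proof.
move=> hx m hm; rewrite /mulEl in hm; case: (In_flatten hm) => m1 [h1 h2].
exact: (mulE_deg (hx _ h1) h2).
Qed.

Definition meas (x : seq mon) : nat := sumn (map (fun m => size (mb m)) x).

Lemma meas_cat x y : meas (x ++ y) = (meas x + meas y)%N.
Proof. by rewrite /meas map_cat sumn_cat. Qed.

Lemma meas_mulE m e : (meas (mulE m e) <= size (mb m))%N.
Proof.
case: m => r u a [|b1 b]; rewrite /mulE /=; case: decP => _ //=.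
by rewrite /meas /= addn0.
Qed.

Lemma meas_mulE_lt m e : mb m <> [::] -> (meas (mulE m e) < size (mb m))%N.
Proof.
case: m => r u a [|b1 b] //= _; rewrite /mulE /=; case: decP => _ //=.
by rewrite /meas /= addn0.
Qed.

Lemma meas_le x e : (meas (mulEl x e) <= meas x)%N.
Proof.
elim: x => [|m x IH] //=; rewrite /mulEl /= meas_cat -/(mulEl x e).
by rewrite /meas /= -/(meas x) leq_add // meas_mulE.
Qed.

Lemma meas_lt x e : (exists m, List.In m x /\ mb m <> [::]) -> (meas (mulEl x e) < meas x)%N.
Proof.
elim: x => [|m x IH] [m0 [//= hm0 hb]].
rewrite /mulEl /= meas_cat -/(mulEl x e) /meas /= -/(meas x).
case: hm0 => [e0|hm0].
  subst m0; by rewrite -addSn leq_add // ?meas_mulE_lt // meas_le.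
by rewrite -addnS leq_add // ?meas_mulE // IH //; exists m0.
Qed.

Lemma meas_filter (p : pred mon) x : (meas (filter p x) <= meas x)%N.
Proof.
elim: x => [|m x IH] //=; case: (p m) => /=; rewrite /meas /= -/(meas x) -/(meas (filter p x)).
  by rewrite leq_add2l.
exact: leq_trans IH (leq_addl _ _).
Qed.

Definition regular (v : V) : Prop :=
  exists l : seq Ed, (forall e, src e = v <-> List.In e l) /\ List.NoDup l /\ l <> [::].

Lemma nonreg v b1 (F : seq Ed) : ~ regular v -> src b1 = v ->
  exists e, src e = v /\ ~ List.In e F.
Proof.
move=> hnr hb1; apply: NNPP => hno; apply: hnr.
case: (dedup_ex F (fun e => src e = v)) => U [hnd hU].
exists U; split; last split => //.
  move=> e; rewrite hU; split; last by case.
  move=> he; split=> //; apply: NNPP => hn; apply: hno; by exists e.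
move=> U0; have : List.In b1 U by rewrite hU; split=> //; apply: NNPP => hn; apply: hno; exists b1.
by rewrite U0.
Qed.


Definition Phi (U : seq Ed) (T : term) : term :=
  TAdd T (TScale (-1) (sumT U (fun f => TMul (TMul T (tE f)) (tS f)))).

Lemma Phi_eqv U T T' : T === T' -> Phi U T === Phi U T'.
Proof.
move=> h; rewrite /Phi; apply: eq_add => //; apply: eq_scale.
by apply: sumT_eq => f _; rewrite h.
Qed.

Lemma Phi_add U T1 T2 : Phi U (TAdd T1 T2) === TAdd (Phi U T1) (Phi U T2).
Proof.
rewrite /Phi -add4; apply: eq_add => //.
rewrite -eq_scaleDr -sumT_add; apply: eq_scale; apply: sumT_eq => f _.
by rewrite eq_mulDl eq_mulDl.
Qed.

Lemma Phi_zero U : Phi U TZero === TZero.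
Proof.
rewrite /Phi (sumT_zero (l := U)) ?scale0r ?tAdd0 // => f _.
by rewrite !mul0l.
Qed.

Lemma Phi_nf U y : Phi U (nf y) === sumT y (fun m => Phi U (mterm m)).
Proof.
elim: y => [|m y IH] /=; first exact: Phi_zero.
by rewrite /nf /= -/(nf y) Phi_add IH.
Qed.

Lemma Phi_ghost U m b1 b' : mvalid m -> mb m = b1 :: b' -> List.NoDup U -> List.In b1 U ->
  Phi U (mterm m) === TZero.
Proof.
move=> hv hb hnd hin; rewrite /Phi.
rewrite (sumT_single (k := b1)) //.
  rewrite mulE_spec // /mulE hb decT // nf1 /mterm /=.
  rewrite eq_scale_mull -tMulA -ghS -hb.
  exact: tAddN.
move=> f hf ne; rewrite mulE_spec // /mulE hb decF; first exact: mul0l.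
by move=> e; apply: ne.
Qed.


Definition hdeg (x : seq mon) (g : G) : Prop := forall m, List.In m x -> mdeg m = g.

Lemma single x v g :
  (forall y g', (meas y < meas x)%N -> allv y -> hdeg y g' -> pi (nf y) = 0 -> nf y === TZero) ->
  allv x -> (forall m, List.In m x -> msrc m = v) -> hdeg x g -> pi (nf x) = 0 ->
  nf x === TZero.
Proof.
move=> IH hx hs hd hpi.
have hxv : nf x === TMul (nf x) (tV v).
  by rewrite nf_v filter_all_In // => m hm; rewrite decT //; apply: hs.
case: (classic (exists m, List.In m x /\ mb m <> [::])) => [hex|hnone]; last first.
  have hb : forall m, List.In m x -> mb m = [::].
    by move=> m hm; apply: NNPP => hn; apply: hnone; exists m.
  apply: (RP (n := size x) (v := v) (g := g) (q := tV v) (q' := tV v) (z := v)) => //.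
  - move=> m hm; split; first exact: hx.
    split; first exact: hb.
    move: (hs m hm) (hd m hm); rewrite /msrc /mdeg (hb m hm) /= => -> <-.
    by rewrite (og_id_r HG).
  - exact: eq_vv.
  - exact: eq_vv.
  - exact: pi_mull0.
have HF : forall f, TMul (nf x) (tE f) === TZero.
  move=> f; rewrite nf_mulE //; apply: (IH _ (op g (w f))).
  - exact: meas_lt.
  - exact: mulEl_valid.
  - exact: mulEl_deg.
  - by rewrite -(pi_eqv (nf_mulE f hx)); apply: pi_mull0.
case: (classic (regular v)) => [[l [hl [hnd hne]]]|hnr].
  rewrite hxv (@eq_CK2 R V Ed rng src v l hl hnd hne).
  change (TMul (nf x) (sumT l (fun e => TMul (tE e) (tS e))) === TZero).
  rewrite sumT_mulr; apply: sumT_zero => e _.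
  by rewrite tMulA HF mul0l.
case: hex => m0 [hm0 hb0].
case hb0' : (mb m0) hb0 => [//|b1 b'] _.
have hsb1 : src b1 = v by rewrite -(hs m0 hm0) /msrc hb0'.
pose fe := flatten (map (fun m => if mb m is b :: _ then [:: b] else [::]) x).
case: (dedup_ex fe (fun _ => True)) => U [hnd hU].
case: (nonreg U hnr hsb1) => e [hse heU].
have hx0 : nf x === Phi U (nf x).
  rewrite /Phi (sumT_zero (l := U)) ?scale0r ?tAddr0 // => f _.
  by rewrite HF mul0l.
pose Y := fun m : mon => dec (mb m = [::]).
set y := filter Y x.
have hxy : nf x === Phi U (nf y).
  rewrite hx0 Phi_nf (sumT_filter Y) -/y -Phi_nf.
  rewrite (sumT_zero (l := filter (predC Y) x)) ?tAddr0 //.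
  move=> m /In_filter [hm]; rewrite /predC /Y /=; case: decP => //= hbm _.
  case hbm' : (mb m) hbm => [//|c1 c'] _.
  apply: (Phi_ghost (b1 := c1) (b' := c')) => //; first exact: hx.
  rewrite hU; split=> //; rewrite /fe.
  elim: (x) hm => [|m' x' IHx] //= [em|hm'].
    by subst m'; rewrite hbm' /=; left.
  by apply/In_cat; right; apply: IHx.
have hye : pi (TMul (nf y) (tE e)) = 0.
  have -> : pi (TMul (nf y) (tE e)) = pi (TMul (Phi U (nf y)) (tE e)).
    apply: pi_eqv; rewrite /Phi eq_mulDl eq_scale_mull.
    rewrite (sumT_mull _ _ (tE e)) (sumT_zero (l := U)) ?scale0r ?tAddr0 // => f hf.
    rewrite -tMulA eq_CK1' ?mul0r //.
    by move=> ef; apply: heU; rewrite -ef.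
  by apply: pi_mull0; rewrite -(pi_eqv hxy).
have hy0 : nf y === TZero.
  apply: (RP (n := size y) (v := v) (g := g) (q := tE e) (q' := tS e) (z := rng e)) => //.
  - move=> m /In_filter [hm]; rewrite /Y; case: decP => //= hbm _.
    split; first exact: hx.
    split=> //.
    move: (hs m hm) (hd m hm); rewrite /msrc /mdeg hbm /= => -> <-.
    by rewrite (og_id_r HG).
  - by rewrite -hse eq_se.
  - exact: eq_CK1.
by rewrite hxy (Phi_eqv U hy0) Phi_zero.
Qed.


Lemma srcsplit x0 :
  (forall y g', (meas y < meas x0)%N -> allv y -> hdeg y g' -> pi (nf y) = 0 -> nf y === TZero) ->
  forall k x g, (size x <= k)%N -> (meas x <= meas x0)%N -> allv x -> hdeg x g ->
  pi (nf x) = 0 -> nf x === TZero.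
Proof.
move=> IH; elim=> [|k IHk] [|m x] g //= hs hm hx hd hpi.
set X := m :: x.
change (nf X === TZero); change (pi (nf X) = 0) in hpi.
have {hm} hm : (meas X <= meas x0)%N := hm.
set v := msrc m.
pose Q := fun m' => dec (msrc m' = v).
have hv0 : nf (filter Q X) === TZero.
  apply: (single (v := v) (g := g)).
  - move=> y g' hy; apply: IH.
    exact: leq_trans hy (leq_trans (meas_filter _ _) hm).
  - by move=> m' /In_filter [hm' _]; apply: hx.
  - by move=> m' /In_filter [_]; rewrite /Q; case: decP.
  - by move=> m' /In_filter [hm' _]; apply: hd.
  - by rewrite -(pi_eqv (nf_v X v)); apply: pi_mull0.
have split : nf X === nf (filter (predC Q) X).
  by rewrite {1}/nf (sumT_filter Q) -/(nf (filter Q X)) hv0 tAdd0.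
rewrite split; apply: (IHk _ g).
- rewrite /X /= /Q /predC /= decT //= size_filter (leq_trans (count_size _ _)) //.
- exact: leq_trans (meas_filter _ _) hm.
- by move=> m' /In_filter [hm' _]; apply: hx.
- by move=> m' /In_filter [hm' _]; apply: hd.
- by rewrite -hpi; apply: pi_eqv; rewrite split.
Qed.

Lemma mainH n : forall x g, (meas x <= n)%N -> allv x -> hdeg x g -> pi (nf x) = 0 ->
  nf x === TZero.
Proof.
elim: n => [|n IHn] x g hm hx hd hpi; apply: (srcsplit (x0 := x) _ (k := size x) (g := g)) => //.
- by move=> y g' hy; exfalso; move: (leq_trans hy hm); rewrite ltn0.
- move=> y g' hy; apply: IHn; rewrite -ltnS; exact: leq_trans hy hm.
Qed.

Lemma In_map2 (X Y : Type) (f : X -> Y) (l : seq X) x :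
  List.In x l -> List.In (f x) (map f l).
Proof. by elim: l => [|y l IH] //= [<-|h]; [left|right; apply: IH]. Qed.

Lemma kernel t : pi t = 0 -> t === TZero.
Proof.
move=> hpi.
case: (normal_form t) => x [hx hxt].
rewrite hxt; rewrite (pi_eqv hxt) in hpi.
case: (dedup_ex (map mdeg x) (fun _ => True)) => U [hnd hU].
pose Dg := fun g (m : mon) => dec (mdeg m = g).
have hpart : nf x === sumT U (fun g => nf (filter (Dg g) x)).
  apply: sumT_partition => // m hm; rewrite hU; split=> //; exact: In_map2.
pose F := fun g => (g, pi (nf (filter (Dg g) x))).
have hcomp : forall g, List.In g U -> pi (nf (filter (Dg g) x)) = 0.
  move=> g hg.
  have hgi := @gr_indep _ _ _ _ _ _ HAgr (map F U).
  have hfst : map fst (map F U) = U by elim: (U) => //= g' U' ->.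
  rewrite hfst in hgi.
  have hin : forall p, List.In p (map F U) -> Acomp p.1 p.2.
    move=> p hp; case: (In_map hp) => g' [hg' ->] /=.
    apply: Hpigr; apply: nf_homog => m /In_filter [_]; rewrite /Dg; by case: decP.
  have hsum : \sum_(p <- map F U) p.2 = 0.
    rewrite big_map /= -pi_sumT -hpi; apply: pi_eqv; by rewrite hpart.
  exact: (hgi hnd hin hsum (F g) (In_map2 F hg)).
rewrite hpart; apply: sumT_zero => g hg.
apply: (mainH (n := meas (filter (Dg g) x)) (g := g)) => //.
- by move=> m /In_filter [hm _]; apply: hx.
- by move=> m /In_filter [_]; rewrite /Dg; case: decP.
- exact: hcomp.
Qed.

End Terms.

Theorem mainTheorem14
  (V Ed : Type) (rng src : Ed -> V)
  (G : Type) (op : G -> G -> G) (eps : G) (inv : G -> G) (le : G -> G -> Prop)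
  (HG : ordered_group op eps inv le)
  (w : Ed -> G) (Hw : forall e, positive_elt eps le (w e))
  (R : comPzRingType)
  (A : lmodType R) (mul : A -> A -> A) (HA : nu_algebra mul)
  (Acomp : G -> A -> Prop) (HAgr : graded_algebra mul op Acomp)
  (pi : lpa_term R V Ed -> A)
  (Hpi : lpa_hom rng src mul pi)
  (Hpigr : forall g t, lpa_homog op eps inv w g t -> Acomp g (pi t))
  (Hnz : forall v (a : R), a != 0 -> pi (TScale a (tV v)) <> 0) :
  forall t u, pi t = pi u -> lpa_eq rng src t u.
Proof.
move=> t u htu; apply: eqv_of_diff.
apply: (kernel HG Hw HA HAgr Hpi Hpigr Hnz).
by rewrite (hom_addP Hpi) (hom_scaleP Hpi) htu scaleN1r subrr.
Qed.
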